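(* Let $\{F_1,\ldots,F_m\}$, $m\ge 2$, be a collection of $X$-forests, either all rooted or all unrooted. Let $1\le p\le m$ and let $T_1,\ldots,T_t$ ($t\ge1$) be connected components of $F_p$, with $Y=L(T_1)\cup\cdots\cup L(T_t)$. Suppose that for some $q\neq p$, $1\le q\le m$, there is an edge $e$ of $F_q$ such that, if $T_e^1$ and $T_e^2$ denote the two subtrees created by removing $e$ from $F_q$, we have $L(T_e^1)\subseteq Y$ and $L(T_e^2)\cap Y=\emptyset$. Let $F'_q=F_q\setminus\{e\}$ and $F'_j=F_j$ for $j\neq q$. Then $\{F'_1,\ldots,F'_m\}$ and $\{F_1,\ldots,F_m\}$ have the same collection of maximum agreement forests.
   Context: Let $X$ be a finite label set. An unrooted $X$-forest is a subgraph of a tree whose leaves are labeled bijectively by $X$ and whose unlabeled vertices have degree at least 3, such that each component contains a leaf and the label sets of the components partition $X$. A rooted $X$-forest is defined in the same way, where $X$ contains a distinguished label $\rho$ whose leaf is the root of the underlying tree $T$, and each component is rooted at $\rho$ if it contains it and otherwise at the lowest common ancestor in $T$ of its labeled leaves. Forests are considered up to forced contraction (unlabeled degree-2 vertices other than component roots are suppressed; unlabeled vertices of degree less than 2 are deleted). For a subtree $T'$, $L(T')$ is its set of labels. $\mathrm{Ord}(F)$ is the number of components. $F'$ is a subforest of $F$ if, up to forced contraction, $F'$ is isomorphic (preserving labels, and roots in the rooted case) to $F$ with some edges deleted. An agreement forest for a collection of $X$-forests is an $X$-forest that is a subforest of each of them; a maximum agreement forest is one of minimum order. $F\setminus\{e\}$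 denotes $F$ with edge $e$ deleted. *)

(* Defs.v *)
From mathcomp Require Import all_boot.
Unset Printing Implicit Defensive.

(* An X-forest is represented concretely by its underlying tree T (vertices
   'I_fn, symmetric edge relation tE, leaf labelling lab : X -> 'I_fn) together
   with the subgraph (vertex set fV, symmetric edge relation fE) of T.
   Rooted/unrooted is encoded by  r : option X  (None = unrooted,
   Some rho = rooted with distinguished root label rho). *)

Record forest (X : finType) := Forest {
  fn : nat;
  tE : rel 'I_fn;
  lab : X -> 'I_fn;
  fV : {set 'I_fn};
  fE : rel 'I_fn }.
Arguments Forest {X}.
Arguments fn {X}.
Arguments tE {X}.
Arguments lab {X}.
Arguments fV {X}.
Arguments fE {X}.

Section Forests.
Context {X : finType}.
Implicit Types (F G A : forest X) (r : option X).

Definition avoid (n : nat) (E : rel 'I_n) (w : 'I_n) : rel 'I_n :=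
  [rel a b | E a b && (a != w) && (b != w)].
Arguments avoid {n}.

(* w lies on the (unique, in an acyclic graph) E-path from a to b *)
Definition onpath (n : nat) (E : rel 'I_n) (a b w : 'I_n) : bool :=
  connect E a b && [|| w == a, w == b | ~~ connect (avoid E w) a b].
Arguments onpath {n}.

Definition rmedge (n : nat) (E : rel 'I_n) (u v : 'I_n) : rel 'I_n :=
  [rel a b | E a b && ~~ (((a == u) && (b == v)) || ((a == v) && (b == u)))].
Arguments rmedge {n}.

Definition tdeg F (v : 'I_(fn F)) : nat := #|[set w | tE F v w]|.

Definition is_tree F : Prop :=
  symmetric (tE F) /\ irreflexive (tE F) /\
  (forall a b, connect (tE F) a b) /\
  (* acyclic: every edge is a bridge *)
  (forall u v, tE F u v -> ~~ connect (rmedge (tE F) u v) u v).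

Definition is_phylo F : Prop :=
  injective (lab F) /\
  (forall v, v \in codom (lab F) -> tdeg F v <= 1) /\
  (forall v, v \notin codom (lab F) -> 3 <= tdeg F v).

Definition is_Xforest F : Prop :=
  is_tree F /\ is_phylo F /\
  symmetric (fE F) /\
  (forall a b, fE F a b -> tE F a b) /\
  (forall a b, fE F a b -> (a \in fV F) && (b \in fV F)) /\
  (forall x, lab F x \in fV F) /\
  (forall v, v \in fV F -> exists x, connect (fE F) v (lab F x)).

(* vertices surviving the iterated deletion of unlabelled vertices of degree < 2:
   those lying on a path of F between two labelled leaves *)
Definition hull F (v : 'I_(fn F)) : bool :=
  (v \in fV F) && [exists x, exists y, onpath (fE F) (lab F x) (lab F y) v].

Definition hdeg F (v : 'I_(fn F)) : nat := #|[set w | fE F v w && hull F w]|.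

(* u is an ancestor of v in T rooted at the leaf labelled rho *)
Definition anc F (rho : X) (u v : 'I_(fn F)) : bool :=
  onpath (tE F) (lab F rho) v u.

Definition is_lca F (rho : X) (S : {set 'I_(fn F)}) (u : 'I_(fn F)) : bool :=
  [forall s in S, anc F rho u s] &&
  [forall w, [forall s in S, anc F rho w s] ==> anc F rho w u].

Definition compL F (v : 'I_(fn F)) : {set 'I_(fn F)} :=
  [set w | [exists x, (w == lab F x) && connect (fE F) v (lab F x)]].

Definition croot F r (v : 'I_(fn F)) : bool :=
  match r with
  | None => false
  | Some rho =>
      (v \in fV F) &&
      (if connect (fE F) v (lab F rho) then v == lab F rho
       else is_lca F rho (compL F v) v)
  end.

(* vertices kept by forced contraction *)
Definition kept F r (v : 'I_(fn F)) : bool :=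
  hull F v && [|| v \in codom (lab F), 3 <= hdeg F v | croot F r v].

Definition cedge F r (a b : 'I_(fn F)) : bool :=
  [&& kept F r a, kept F r b, a != b, connect (fE F) a b &
      [forall w, onpath (fE F) a b w ==> kept F r w ==> (w == a) || (w == b)]].

Definition fiso r F G : Prop :=
  exists f : 'I_(fn F) -> 'I_(fn G),
    {in kept F r &, injective f} /\
    (forall w, kept G r w <-> exists2 v, kept F r v & f v = w) /\
    (forall a b, kept F r a -> kept F r b -> cedge G r (f a) (f b) = cedge F r a b) /\
    (forall x, f (lab F x) = lab G x) /\
    (forall v, kept F r v -> croot G r (f v) = croot F r v).

Definition with_edges F (E : rel 'I_(fn F)) : forest X :=
  @Forest X (fn F) (tE F) (lab F) (fV F) E.

Definition del_edge F (u v : 'I_(fn F)) : forest X :=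
  with_edges F (rmedge (fE F) u v).

Definition subforest r A F : Prop :=
  exists E : rel 'I_(fn F),
    (forall a b, E a b -> fE F a b) /\ symmetric E /\ fiso r A (with_edges F E).

Definition Ord F : nat :=
  #|[set [set w in fV F | connect (fE F) v w] | v in fV F]|.

Definition agreement r (m : nat) (Fs : 'I_m -> forest X) A : Prop :=
  is_Xforest A /\ forall i, subforest r A (Fs i).

Definition maf r (m : nat) (Fs : 'I_m -> forest X) A : Prop :=
  agreement r m Fs A /\ forall B, agreement r m Fs B -> Ord A <= Ord B.

End Forests.

(* Main.v *)
Require Import Defs.
From mathcomp Require Import all_boot.
From Stdlib Require Import FunctionalExtensionality.
Set Implicit Arguments. Unset Strict Implicit. Unset Printing Implicit Defensive.

Section Gen.
Variable n : nat.
Implicit Types (R S : rel 'I_n).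

Lemma L1 R S c d a b :
  (forall x y, R x y -> ~~ S x y -> ((x == c) && (y == d)) || ((x == d) && (y == c))) ->
  connect R a b -> [|| connect S a b, connect S a c | connect S a d].
Proof.
move=> Hrem /connectP[p Hp ->].
suff H: forall z, path R z p -> [|| connect S a z, connect S a c | connect S a d] ->
   [|| connect S a (last z p), connect S a c | connect S a d].
  by apply: H => //; rewrite connect0.
move=> {Hp}; elim: p => [|y p IH] z //= /andP[Rzy Hp] Hz; apply: IH Hp _.
case/or3P: Hz => [Haz|->|->]; rewrite ?orbT //.
case HS: (S z y); first by rewrite (connect_trans Haz (connect1 HS)).
move: (Hrem _ _ Rzy); rewrite HS => /(_ isT) /orP[/andP[/eqP Ez _]|/andP[/eqP Ez _]];
  by rewrite Ez in Haz; rewrite Haz ?orbT.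
Qed.

Lemma L2 R S c d a b :
  symmetric R -> symmetric S ->
  (forall x y, R x y -> ~~ S x y -> ((x == c) && (y == d)) || ((x == d) && (y == c))) ->
  ~~ connect S a c -> ~~ connect S b c -> connect R a b -> connect S a b.
Proof.
move=> sR sS Hrem Hac Hbc Hab.
have cS := sym_connect_sym sS.
have Hba : connect R b a by rewrite (sym_connect_sym sR).
case/or3P: (L1 Hrem Hab) => [//|H|Had]; first by rewrite H in Hac.
case/or3P: (L1 Hrem Hba) => [H|H|Hbd]; first by rewrite cS.
  by rewrite H in Hbc.
by rewrite (connect_trans Had) // cS.
Qed.

Lemma path_avoid R w a s : path R a s -> all (fun y => y != w) (a :: s) ->
  path (avoid _ R w) a s.
Proof.
elim: s a => [|y s IH] a //= /andP[Ray Hp] /and3P[Ha Hy Hs].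
by rewrite /avoid /= Ray Ha Hy IH //= Hy.
Qed.

Lemma L3 R a b z : onpath _ R a b z -> connect R a z.
Proof.
case/andP => Hab /or3P[/eqP->|/eqP->|Hn] //.
apply/negPn/negP => Haz; case/negP: Hn.
case/connectP: Hab => p Hp ->.
suff H: forall y, connect R a y -> path R y p -> path (avoid _ R z) y p.
  by apply/connectP; exists p => //; apply: H.
move=> {Hp}; elim: p => [|w p IH] y //= Hay /andP[Ryw Hp].
have Haw := connect_trans Hay (connect1 Ryw).
rewrite /avoid /= Ryw IH // andbT.
by apply/andP; split; apply/eqP => E; subst; [rewrite Hay in Haz|rewrite Haw in Haz].
Qed.

End Gen.

Section Forest2.
Variable X : finType.
Implicit Types (H A G F : forest X) (r : option X).

Lemma conn_cedge H r a b : kept H r a -> kept H r b -> connect (fE H) a b ->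
  connect (cedge H r) a b.
Proof.
move=> Ka Kb /connectP[p Hp Eb].
have [N] := ubnP (size p); elim: N => // N IH in p a Ka Hp Eb * => Hsz.
case Hh: (has (kept H r) p); last first.
  move: (mem_last a p); rewrite -Eb inE => /orP[/eqP->//|Hbp].
  have: has (kept H r) p by apply/hasP; exists b.
  by rewrite Hh.
case: (split_find Hh) Hp Hsz Eb => w s1 s2 Kw Hn1.
rewrite cat_path rcons_path last_cat last_rcons size_cat size_rcons.
move=> /andP[/andP[Hp1 Rw] Hp2] Hsz Eb.
apply: (@connect_trans _ _ w); last first.
  apply: (IH s2 w Kw Hp2 Eb); by rewrite ltnS in Hsz; apply: leq_trans Hsz; rewrite addSn ltnS leq_addl.
case: (eqVneq a w) => [->//|Naw]; apply: connect1.
rewrite /cedge Ka Kw Naw /=; apply/andP; split.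
  by apply/connectP; exists (rcons s1 w); [rewrite rcons_path Hp1 Rw|rewrite last_rcons].
apply/forallP => w'; apply/implyP => Hon; apply/implyP => Kw'.
case: (eqVneq w' a) => [//|Nwa]; case: (eqVneq w' w) => [//|Nww] /=.
case/andP: Hon => _ /or3P[|H1|Hn]; [by rewrite (negPf Nwa)|by rewrite (negPf Nww) in H1|].
case/negP: Hn; apply/connectP; exists (rcons s1 w); last by rewrite last_rcons.
apply: path_avoid; first by rewrite rcons_path Hp1 Rw.
rewrite /= all_rcons eq_sym Nwa eq_sym Nww /=.
apply/allP => y Hy; apply/eqP => E; subst y.
by case/negP: Hn1; apply/hasP; exists w'.
Qed.

Lemma kept_lab H r x : lab H x \in fV H -> kept H r (lab H x).
Proof.
move=> Hx; rewrite /kept /hull Hx /= codom_f andbT.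
by apply/existsP; exists x; apply/existsP; exists x; rewrite /onpath connect0 eqxx.
Qed.

Lemma fiso_conn r A G : fiso r A G -> (forall x, lab A x \in fV A) -> forall x y,
  connect (cedge G r) (lab G x) (lab G y) <-> connect (cedge A r) (lab A x) (lab A y).
Proof.
case=> f [Hinj [Hsurj [Hced [Hlab Hroot]]]] HA x y; rewrite -!Hlab; split.
  have Kx := kept_lab r (HA x); have Ky := kept_lab r (HA y).
  case/connectP => p Hp Ep.
  suff [b Kb [Eb Cb]] : exists2 b, kept A r b & f b = last (f (lab A x)) p /\
         connect (cedge A r) (lab A x) b.
    by rewrite -Ep in Eb; rewrite -(Hinj _ _ Kb Ky Eb).
  move: {Ep} Kx Hp; move: (lab A x) => a.
  elim: p a => [|z p IH] a Ka /=; first by exists a.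
  case/andP => Caz Hp; have /and3P[_ Kz _] := Caz.
  have [b Kb Eb] := (iffLR (Hsurj z) Kz); subst z.
  rewrite Hced // in Caz.
  have [c Kc [Ec Cc]] := IH b Kb Hp.
  by exists c => //; split => //; apply: connect_trans (connect1 Caz) Cc.
case/connectP => p Hp ->.
have := kept_lab r (HA x); move: Hp; move: (lab A x) => a.
elim: p a => [|z p IH] a //= /andP[Caz Hp] Ka.
have /and3P[_ Kz _] := Caz.
apply: connect_trans (IH z Hp Kz); apply: connect1; by rewrite Hced.
Qed.

Lemma cedge_conn H r a b : connect (cedge H r) a b -> connect (fE H) a b.
Proof.
apply: connect_sub => x y; rewrite /cedge => /and5P[_ _ _ H1 _]; exact: H1.
Qed.

End Forest2.

Lemma conn_mono (n : nat) (R S : rel 'I_n) a b :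
  (forall x y, S x y -> R x y) -> connect S a b -> connect R a b.
Proof. by move=> HS; apply: connect_sub => x y /HS; apply: connect1. Qed.

Lemma sym_avoid (n : nat) (R : rel 'I_n) w : symmetric R -> symmetric (avoid _ R w).
Proof.
move=> sR x y; rewrite /avoid /= sR -!andbA; congr (_ && _).
by rewrite andbC.
Qed.

Lemma if_andb_eq (b c1 c2 A B B' : bool) :
  c1 = c2 -> B = B' -> b && (if c1 then A else B) = b && (if c2 then A else B').
Proof. by move=> -> ->. Qed.

Lemma and_or3_eq (h h' a a' b b' c c' : bool) : h = h' -> (h' -> a = a') ->
  (h' -> b = b') -> (h' -> c = c') -> h && [|| a, b | c] = h' && [|| a', b' | c'].
Proof. by move=> ->; case: h' => //= Ha Hb Hc; rewrite Ha // Hb // Hc. Qed.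

Lemma and5_eq (a b c d e a' b' c' d' e' : bool) : a = a' -> b = b' -> c = c' -> d = d' ->
  e = e' -> [&& a, b, c, d & e] = [&& a', b', c', d' & e'].
Proof. by move=> -> -> -> -> ->. Qed.

Lemma beqP (a b : bool) : a = b -> a -> b.
Proof. by move=> ->. Qed.

Section Inv.
Variable X : finType.
Variables (F : forest X) (r : option X) (E E' : rel 'I_(fn F)) (c d : 'I_(fn F)).
Hypotheses (sE : symmetric E) (sE' : symmetric E') (Hsub : forall a b, E' a b -> E a b)
  (Hrem : forall a b, E a b -> ~~ E' a b -> ((a == c) && (b == d)) || ((a == d) && (b == c)))
  (Hlab : forall x, ~~ connect E' (lab F x) c).

Let G := with_edges F E.
Let G' := with_edges F E'.

Lemma Hconn a b : ~~ connect E' a c -> ~~ connect E' b c ->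
  connect E a b = connect E' a b.
Proof.
move=> Ha Hb; apply/idP/idP; [exact: (L2 sE sE' Hrem Ha Hb)|exact: conn_mono].
Qed.

Lemma Honp a b w : ~~ connect E' a c -> ~~ connect E' b c ->
  onpath _ E a b w = onpath _ E' a b w.
Proof.
move=> Ha Hb; rewrite /onpath Hconn //.
suff ->: connect (avoid _ E w) a b = connect (avoid _ E' w) a b by [].
have Hsa: forall z, ~~ connect E' z c -> ~~ connect (avoid _ E' w) z c.
  move=> z; apply: contra; apply: conn_mono => x y; by rewrite /avoid /= => /andP[/andP[]].
apply/idP/idP; last first.
  by apply: conn_mono => x y; rewrite /avoid /= => /andP[/andP[/Hsub -> ->] ->].
have Hr: forall x1 y1, avoid _ E w x1 y1 -> ~~ avoid _ E' w x1 y1 ->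
   ((x1 == c) && (y1 == d)) || ((x1 == d) && (y1 == c)).
  move=> x y; rewrite /avoid /= => /andP[/andP[Exy Hx] Hy]; rewrite Hx Hy !andbT => HN; exact: Hrem.
exact: (L2 (sym_avoid w sE) (sym_avoid w sE') Hr (Hsa _ Ha) (Hsa _ Hb)).
Qed.

Lemma hull_nc z : hull G' z -> ~~ connect E' z c.
Proof.
case/andP => _ /existsP[x /existsP[y /L3 Hxz]].
apply/negP => Hzc; case/negP: (Hlab x); exact: connect_trans Hxz Hzc.
Qed.

Lemma hullE z : hull G z = hull G' z.
Proof.
rewrite /hull; congr (_ && _); apply: eq_existsb => x; apply: eq_existsb => y.
exact: (Honp _ (Hlab x) (Hlab y)).
Qed.

Lemma hdegE z : hull G' z -> hdeg G z = hdeg G' z.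
Proof.
move=> Hz; rewrite /hdeg; apply: eq_card => w; rewrite !inE hullE.
case Hw: (hull G' w); rewrite ?andbF // !andbT.
apply/idP/idP => [Ezw|/Hsub//]; apply/negPn/negP => N.
case/orP: (Hrem Ezw N) => /andP[/eqP Ez /eqP Ew]; subst.
  by case/negP: (hull_nc Hz); rewrite connect0.
by case/negP: (hull_nc Hw); rewrite connect0.
Qed.

Lemma crootE z : hull G' z -> croot G r z = croot G' r z.
Proof.
move=> Hz; case: r => [rho|//].
have Hnz := hull_nc Hz.
have HcE : compL G z = compL G' z.
  apply/setP => w; rewrite !inE.
  apply: (@eq_existsb X (fun x => (w == lab F x) && connect E z (lab F x))) => x.
  by rewrite (Hconn Hnz (Hlab x)).
apply: if_andb_eq; first exact: (Hconn Hnz (Hlab rho)).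
exact: (congr1 (fun S => is_lca G' rho S z) HcE).
Qed.

Lemma keptE z : kept G r z = kept G' r z.
Proof.
apply: and_or3_eq; first exact: hullE.
- by move=> _; exact: erefl.
- by move=> Hz; exact: (congr1 (leq 3) (hdegE Hz)).
- exact: crootE.
Qed.

Lemma cedgeE a b : kept G r a -> kept G r b -> cedge G r a b = cedge G' r a b.
Proof.
move=> Ka Kb.
have Ka' := beqP (keptE a) Ka; have Kb' := beqP (keptE b) Kb.
have Ha := hull_nc (proj1 (andP Ka')); have Hb := hull_nc (proj1 (andP Kb')).
apply: and5_eq; [exact: keptE|exact: keptE|exact: erefl|exact: (Hconn Ha Hb)|].
apply: eq_forallb => w.
have -> : onpath _ (fE G) a b w = onpath _ (fE G') a b w by exact: (Honp w Ha Hb).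
have -> : kept G r w = kept G' r w by exact: keptE.
exact: erefl.
Qed.

Lemma fiso_inv A : fiso r A G -> fiso r A G'.
Proof.
case=> f [Hinj [Hsurj [Hced [Hl Hroot]]]]; exists f.
have KfG : forall v, kept A r v -> kept G r (f v).
  by move=> v Kv; apply: (iffRL (Hsurj (f v))); exists v.
split; first exact: Hinj.
split.
  move=> w; split => [Kw|[v Kv Ev]].
    exact: (iffLR (Hsurj w) (beqP (esym (keptE w)) Kw)).
  exact: (beqP (keptE w) (iffRL (Hsurj w) (ex_intro2 _ _ v Kv Ev))).
split.
  move=> a b Ka Kb; apply: (etrans _ (Hced a b Ka Kb)); apply: esym.
  exact: (cedgeE (KfG a Ka) (KfG b Kb)).
split; first exact: Hl.
move=> v Kv; apply: (etrans _ (Hroot v Kv)); apply: esym.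
exact: crootE (proj1 (andP (beqP (keptE (f v)) (KfG v Kv)))).
Qed.

End Inv.

Lemma rel_ext (T : Type) (R S : rel T) : R =2 S -> R = S.
Proof.
move=> H; apply: functional_extensionality => x.
by apply: functional_extensionality => y; apply: H.
Qed.

Lemma rmedge_sym (n : nat) (R : rel 'I_n) u v : symmetric R -> symmetric (rmedge _ R u v).
Proof.
move=> sR x y; rewrite /rmedge /= sR; congr (_ && ~~ _).
by rewrite orbC (andbC (y == u)) (andbC (y == v)).
Qed.

Unset Implicit Arguments.
Theorem lemma3p1 (X : finType) (r : option X) (m : nat)
  (Fs : 'I_m -> forest X) (Hm : 2 <= m)
  (HF : forall i, is_Xforest (Fs i))
  (p q : 'I_m) (Ts : {set 'I_(fn (Fs p))})
  (HTs0 : Ts != set0) (HTs : Ts \subset fV (Fs p))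
  (Hqp : q != p) (u v : 'I_(fn (Fs q))) (He : fE (Fs q) u v) :
  let Y := [set x | [exists w in Ts, connect (fE (Fs p)) w (lab (Fs p) x)]] in
  let Fq' := del_edge (Fs q) u v in
  (forall x, connect (fE Fq') u (lab Fq' x) -> x \in Y) ->
  (forall x, connect (fE Fq') v (lab Fq' x) -> x \notin Y) ->
  forall A : forest X,
    maf r m Fs A <-> maf r m (fun j => if j == q then Fq' else Fs j) A.
Proof.
move=> Y Fq' HY1 HY2 A.
set Fs' := fun j => if j == q then Fq' else Fs j.
have HFlab : forall i x, lab (Fs i) x \in fV (Fs i).
  by move=> i; case: (HF i) => [_ [_ [_ [_ [_ [H _]]]]]].
have Easy : forall B, agreement r m Fs' B -> agreement r m Fs B.
  move=> B [HB HBF]; split; first exact: HB.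
  move=> i; have := HBF i; rewrite /Fs' /=.
  case: ifP => [/eqP Eiq|_]; last by [].
  subst i; case=> E [HE [sE Hiso]]; exists E; split; last by split.
  by move=> a b /HE /andP[].
have Hard : forall B, agreement r m Fs B -> agreement r m Fs' B.
  move=> B [HB HBF]; split; first exact: HB.
  move=> i; rewrite /Fs' /=.
  case: ifP => [/eqP Eiq|_]; last exact: HBF i.
  subst i.
  have HBlab : forall x, lab B x \in fV B by case: HB => [_ [_ [_ [_ [_ [H _]]]]]].
  have [Ep [HEp [sEp Isop]]] := HBF p.
  have [Eq [HEq [sEq Isoq]]] := HBF q.
  have Transfer : forall x y, connect Eq (lab (Fs q) x) (lab (Fs q) y) ->
      connect (fE (Fs p)) (lab (Fs p) x) (lab (Fs p) y).
    move=> x y Hc.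
    have K1 := @kept_lab X (with_edges (Fs q) Eq) r x (HFlab q x).
    have K2 := @kept_lab X (with_edges (Fs q) Eq) r y (HFlab q y).
    have C1 := conn_cedge K1 K2 Hc.
    have C2 := iffLR (fiso_conn Isoq HBlab x y) C1.
    have C3 := iffRL (fiso_conn Isop HBlab x y) C2.
    have C4 := cedge_conn C3.
    exact: (conn_mono HEp C4).
  set E' := rmedge _ Eq u v.
  have sE' : symmetric E' by exact: rmedge_sym.
  have HE'sub : forall a b, E' a b -> Eq a b by move=> a b /andP[].
  exists E'; split.
    move=> a b /andP[/HEq Hf Hn]; rewrite /Fq' /del_edge /with_edges /rmedge /=.
    by rewrite Hf Hn.
  split; first exact: sE'.
  case Huv: (Eq u v); last first.
    have -> : E' = Eq.
      apply: rel_ext => a b; rewrite /E' /rmedge /=.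
      case Hab: (Eq a b) => //=.
      apply/negP => /orP[] /andP[/eqP Ea /eqP Eb]; subst a b.
        by rewrite Huv in Hab.
      by rewrite sEq Huv in Hab.
    exact: Isoq.
  have Hside : (forall x, ~~ connect E' (lab (Fs q) x) u) \/
               (forall x, ~~ connect E' (lab (Fs q) x) v).
    case Hu: [exists x, connect E' (lab (Fs q) x) u]; last first.
      left => x; apply/negP => H.
      have : [exists x, connect E' (lab (Fs q) x) u] by apply/existsP; exists x.
      by rewrite Hu.
    case Hv: [exists x, connect E' (lab (Fs q) x) v]; last first.
      right => x; apply/negP => H.
      have : [exists x, connect E' (lab (Fs q) x) v] by apply/existsP; exists x.
      by rewrite Hv.
    case/existsP: Hu => x Hx; case/existsP: Hv => y Hy.
    have cE' := sym_connect_sym sE'.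
    have Hmono : forall a b, connect E' a b -> connect (fE Fq') a b.
      move=> a b; apply: conn_mono => a1 b1 /andP[/HEq Hf Hn].
      by rewrite /Fq' /del_edge /with_edges /rmedge /= Hf Hn.
    have Yx : x \in Y by apply: HY1; apply: Hmono; rewrite cE'.
    have Yy : y \notin Y by apply: HY2; apply: Hmono; rewrite cE'.
    have Cxy : connect Eq (lab (Fs q) x) (lab (Fs q) y).
      apply: connect_trans (conn_mono HE'sub Hx) _.
      apply: connect_trans (connect1 Huv) _.
      by apply: (conn_mono HE'sub); rewrite cE'.
    have Cp := Transfer x y Cxy.
    move: Yx; rewrite /Y inE => /existsP[w /andP[Hw Cw]].
    case/negP: Yy; rewrite /Y inE; apply/existsP; exists w; rewrite Hw /=.
    exact: connect_trans Cw Cp.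
  have HremU : forall a b, Eq a b -> ~~ E' a b ->
      ((a == u) && (b == v)) || ((a == v) && (b == u)).
    by move=> a b Hab; rewrite /E' /rmedge /= Hab /= negbK.
  case: Hside => Hl.
    exact: (fiso_inv sEq sE' HE'sub HremU Hl Isoq).
  have HremV : forall a b, Eq a b -> ~~ E' a b ->
      ((a == v) && (b == u)) || ((a == u) && (b == v)).
    by move=> a b Hab Hn; rewrite orbC; apply: HremU.
  exact: (fiso_inv sEq sE' HE'sub HremV Hl Isoq).
split=> [[HA Hmin]|[HA Hmin]]; split.
- exact: Hard.
- by move=> B HB; apply: Hmin; apply: Easy.
- exact: Easy.
- by move=> B HB; apply: Hmin; apply: Hard.
Qed.
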